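(* Let $\alpha,\mu$ be partitions with $\mu$ strict. Let $\alpha^-$ be any partition obtained by deleting the top $k$ rows (i.e. the $k$ largest parts) of $\alpha$, where $0\le k<m(\alpha)$. Fix $a>\alpha_1$ and $m>0$ and set $\alpha^+=(a^m,\alpha_1,\alpha_2,\ldots)$. Then: (i) $\alpha$ contains $\mu$ if and only if $\alpha^-$ contains $\mu$; (ii) $\alpha$ contains $\mu$ if and only if $\alpha^+$ contains $\overline\mu$; (iii) for every $c$ with $0<c\le m(\alpha)$, $\alpha$ contains $\mu$ if and only if $\alpha+(1^c)$ contains $\mu+(1)$.
   Context: Partitions are weakly decreasing sequences of nonnegative integers with finitely many nonzero parts, identified with Ferrers boards (row $i$ has $\alpha_i$ boxes). $\alpha$ contains $\mu$ if deleting some rows and some columns of the Ferrers board of $\alpha$ and top/left-justifying yields $\mu$. Strict: positive parts distinct. $m(\alpha)$ is the multiplicity of the largest part of $\alpha$. $(a^m,\alpha_1,\ldots)$ denotes $m$ parts equal to $a$ followed by the parts of $\alpha$. $\alpha+\beta$ is the componentwise sum and $(1^c)$ has $c$ parts equal to $1$. $\overline\mu=(\mu_1+1,\mu_1,\mu_2,\ldots)$. *)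

(* Defs.v *)
From mathcomp Require Import all_boot.
Set Implicit Arguments. Unset Strict Implicit. Unset Printing Implicit Defensive.

(* A partition is represented by the list of its positive parts, weakly
   decreasing (trailing zero parts are omitted). *)
Definition is_partition (s : seq nat) : bool :=
  sorted geq s && all (fun x => 0 < x) s.

Definition is_strict (s : seq nat) : bool := is_partition s && uniq s.

Definition largest (s : seq nat) : nat := foldr maxn 0 s.

Definition mult_largest (s : seq nat) : nat := count (pred1 (largest s)) s.

(* Ferrers board of alpha: cells (i,j) with j < alpha_i.  Keep the rows
   selected by the bitmask rm and the columns selected by the bitmask cm
   (among the columns 0 .. alpha_1 - 1; other columns contain no cells);
   after top/left justification, the kept row with original length a has
   as many boxes as there are kept columns c < a. *)
Definition delete_justify (alpha : seq nat) (rm cm : bitseq) : seq nat :=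
  [seq x <- [seq count (fun c => c < a) (mask cm (iota 0 (largest alpha)))
            | a <- mask rm alpha] | x != 0].

Definition contains (alpha mu : seq nat) : Prop :=
  exists rm cm : bitseq, delete_justify alpha rm cm = [seq x <- mu | x != 0].

Definition prepend_parts (a m : nat) (alpha : seq nat) : seq nat :=
  nseq m a ++ alpha.

Definition add_ones (c : nat) (alpha : seq nat) : seq nat :=
  mkseq (fun i => nth 0 alpha i + (i < c)) (maxn c (size alpha)).

Definition mubar (mu : seq nat) : seq nat := (largest mu).+1 :: mu.

(* Main.v *)
Require Import Defs.
From mathcomp Require Import all_boot.
From mathcomp Require Import zify.
Set Implicit Arguments. Unset Strict Implicit. Unset Printing Implicit Defensive.

Definition cond (s mu : seq nat) := forall j, j < size mu ->
  nth 0 mu j + nth 0 s j.+1 <= nth 0 s j + nth 0 mu j.+1.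
Definition Char (alpha mu : seq nat) :=
  exists s, subseq s alpha /\ size s = size mu /\ cond s mu.

Lemma geq_transitive : transitive geq.
Proof. move=> y x z /= H1 H2; exact: leq_trans H2 H1. Qed.

Lemma Lmax alpha x : x \in alpha -> x <= largest alpha.
Proof.
elim: alpha => //= y r IH; rewrite in_cons => /orP [/eqP ->|/IH H].
  exact: leq_maxl.
exact: leq_trans H (leq_maxr _ _).
Qed.

Lemma sorted_nth_geq s : sorted geq s -> forall j, nth 0 s j.+1 <= nth 0 s j.
Proof.
move=> /(sortedP 0) H j; case: (ltnP j.+1 (size s)) => hj; first exact: H.
by rewrite nth_default.
Qed.

Lemma nth_dec s : (forall j, nth 0 s j.+1 <= nth 0 s j) -> forall j, nth 0 s j <= nth 0 s 0.
Proof. move=> H; elim=> // j IH; exact: leq_trans (H j) IH. Qed.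

Lemma nth_map0 (f : nat -> nat) s j : f 0 = 0 -> nth 0 (map f s) j = f (nth 0 s j).
Proof.
move=> f0; case: (ltnP j (size s)) => hj; first by rewrite (nth_map 0).
by rewrite !nth_default ?size_map.
Qed.

Definition fcol (C : seq nat) a := count (fun c => c < a) C.

Lemma fcol0 C : fcol C 0 = 0.
Proof. by elim: C. Qed.

Lemma f_step C a : uniq C -> fcol C a.+1 <= (fcol C a).+1.
Proof.
move=> uC; rewrite /fcol.
have -> : count (fun c => c < a.+1) C = count (predU (fun c => c < a) (pred1 a)) C.
  apply: eq_count => c /=; by rewrite ltnS leq_eqVlt orbC.
have := count_predUI (fun c => c < a) (pred1 a) C.
have := count_uniq_mem a uC. case: (a \in C) => /= -> ; lia.
Qed.

Lemma f_add C b d : uniq C -> fcol C (b + d) <= fcol C b + d.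
Proof.
move=> uC; elim: d => [|d IH]; first by rewrite !addn0.
rewrite addnS; apply: leq_trans (f_step _ uC) _; by rewrite addnS ltnS.
Qed.

Lemma f_cond C a b : uniq C -> b <= a -> fcol C a + b <= a + fcol C b.
Proof.
move=> uC ba; have := f_add b (a - b) uC; rewrite subnKC //; lia.
Qed.

Lemma contains_char alpha mu : sorted geq alpha -> all (fun x => 0 < x) mu ->
  contains alpha mu -> Char alpha mu.
Proof.
move=> salpha pmu [rm [cm]]; rewrite /delete_justify.
set C := mask cm _.
have uC : uniq C by apply: mask_uniq; exact: iota_uniq.
have Hmu : [seq x <- mu | x != 0] = mu.
  apply/all_filterP; apply: sub_all pmu => x; by rewrite lt0n.
rewrite Hmu filter_map => E.
set s := [seq i <- mask rm alpha | _] in E.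
exists s; split; first exact: subseq_trans (filter_subseq _ _) (mask_subseq _ _).
split; first by rewrite -E size_map.
have ss : sorted geq s.
  apply: (subseq_sorted geq_transitive _ salpha).
  exact: subseq_trans (filter_subseq _ _) (mask_subseq _ _).
move=> j _; rewrite -E !(@nth_map0 (fcol C)) //.
- apply: f_cond => //; exact: sorted_nth_geq.
- exact: fcol0.
- exact: fcol0.
Qed.

Fixpoint colP (s mu : seq nat) : pred nat :=
  match s, mu with
  | x :: s', y :: mu' => fun c => colP s' mu' c ||
        ((nth 0 s' 0 <= c) && (c < nth 0 s' 0 + (y - nth 0 mu' 0)))
  | _, _ => pred0
  end.

Lemma count_iota_lt h n d : d <= n -> count (fun c => c < h + d) (iota h n) = d.
Proof.
move=> dn; rewrite -(subnKC dn) iotaD count_cat.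
rewrite (@eq_in_count _ _ predT (iota h d)); last first.
  move=> c; rewrite mem_iota => /andP [_ ->] //.
rewrite count_predT size_iota.
rewrite (@eq_in_count _ _ pred0 (iota (h + d) _)); last first.
  move=> c; rewrite mem_iota => /andP [H _] /=; rewrite ltnNge H.
  by [].
by rewrite count_pred0 addn0.
Qed.

Lemma cond_tail x s y mu : cond (x :: s) (y :: mu) -> cond s mu.
Proof. move=> H j hj; exact: (H j.+1). Qed.

Lemma cond_dec s mu : sorted geq mu -> size s = size mu -> cond s mu ->
  forall j, nth 0 s j.+1 <= nth 0 s j.
Proof.
move=> smu sz c j; case: (ltnP j (size mu)) => hj.
  have := c j hj; have := sorted_nth_geq smu j; lia.
by rewrite (@nth_default _ _ s j.+1) // sz; apply: leq_trans hj _.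
Qed.

Lemma colP_inv s mu : size s = size mu -> sorted geq mu -> cond s mu ->
  (forall c, colP s mu c -> c < nth 0 s 0) /\
  (forall j, j < size s -> count (colP s mu) (iota 0 (nth 0 s j)) = nth 0 mu j).
Proof.
elim: s mu => [|x s IH] [|y mu] //= sz smu c.
have smu' : sorted geq mu := path_sorted smu.
have c' := cond_tail c.
case: sz => sz.
have [IH1 IH2] := IH mu sz smu' c'.
set h := nth 0 s 0; set g := nth 0 mu 0.
have c0 : y + h <= x + g := c 0 erefl.
have gy : g <= y by rewrite /g; case: (mu) smu => //= z ? /andP [].
have hx : h <= x by lia.
have sdec := cond_dec smu' sz c'.
split.
  move=> z /orP [/IH1 H|/andP [_ H]]; first exact: leq_trans H hx.
  apply: leq_trans H _; lia.
case=> [_|j hj].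
  rewrite -(subnKC hx) iotaD count_cat add0n.
  rewrite (@eq_in_count _ _ (colP s mu) (iota 0 h)); last first.
    move=> z; rewrite mem_iota add0n => /andP [_ H]; by rewrite leqNgt H /= orbF.
  have -> : count (colP s mu) (iota 0 h) = g.
    move: IH2; rewrite /h /g; case: (s) sz => [|w s'] /=.
      by case: (mu).
    move=> _ IH2; exact: IH2 0 erefl.
  rewrite (@eq_in_count _ _ (fun z => z < h + (y - g)) (iota h _)); last first.
    move=> z; rewrite mem_iota => /andP [H1 _].
    have -> : colP s mu z = false.
      by apply/negP => /IH1; rewrite ltnNge H1.
    by rewrite /= H1.
  rewrite count_iota_lt /=; lia.
have ah : nth 0 s j <= h := nth_dec sdec j.
rewrite (@eq_in_count _ _ (colP s mu) (iota 0 _)); last first.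
  move=> z; rewrite mem_iota add0n => /andP [_ H].
  have : z < h by exact: leq_trans H ah.
  by rewrite ltnNge => /negbTE H1; rewrite /= H1 orbF.
exact: IH2.
Qed.

Lemma char_contains alpha mu : sorted geq mu -> Char alpha mu -> contains alpha mu.
Proof.
move=> smu [s [/subseqP [rm szrm Es] [sz c]]].
have [_ H2] := colP_inv sz smu c.
exists rm, (map (colP s mu) (iota 0 (largest alpha))).
rewrite /delete_justify -Es -filter_mask; congr filter.
apply: (@eq_from_nth _ 0); first by rewrite size_map.
move=> j; rewrite size_map => hj.
rewrite (nth_map 0) // count_filter.
have hL : nth 0 s j <= largest alpha.
  apply: Lmax; apply: (mem_subseq (s1:=s)); last exact: mem_nth.
  by rewrite Es mask_subseq.
rewrite -(subnKC hL) iotaD count_cat.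
rewrite (@eq_in_count _ _ (colP s mu) (iota 0 _)); last first.
  by move=> z; rewrite mem_iota add0n => /andP [_ H]; rewrite /= H.
rewrite (@eq_in_count _ _ pred0 (iota (0 + nth 0 s j) (largest alpha - nth 0 s j))); last first.
  by move=> z; rewrite mem_iota add0n => /andP [H _]; rewrite /= ltnNge H.
by rewrite count_pred0 addn0 H2.
Qed.

Lemma char_iff alpha mu : sorted geq alpha -> sorted geq mu ->
  all (fun x => 0 < x) mu -> (contains alpha mu <-> Char alpha mu).
Proof.
move=> sa smu pmu; split; [exact: contains_char | exact: char_contains].
Qed.

Lemma subseq_cat_drop (s u t : seq nat) : subseq s (u ++ t) ->
  (forall z, z \in s -> z \notin u) -> subseq s t.
Proof.
elim: u s => [|y u IH] s; first by [].
case: s => [|z s] /= H Hn; first exact: sub0seq.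
have zy : (z == y) = false.
  apply/negbTE; have := Hn z (mem_head _ _); rewrite in_cons negb_or.
  by case/andP.
move: H; rewrite zy => H; apply: (IH _ H) => w hw.
by have := Hn w hw; rewrite in_cons negb_or => /andP [].
Qed.

Lemma decomp_gen alpha L : (forall z, z \in alpha -> z <= L) -> sorted geq alpha ->
  exists t, alpha = nseq (count (pred1 L) alpha) L ++ t /\ all (fun z => z < L) t.
Proof.
elim: alpha => [|x r IH] Hle sa; first by exists [::].
have sr : sorted geq r := path_sorted sa.
have rx : all (geq x) r := order_path_min geq_transitive sa.
have xL : x <= L := Hle x (mem_head _ _).
case: (ltnP x L) => hx.
  exists (x :: r); split.
    have -> : count (pred1 L) (x :: r) = 0.
      apply/eqP; rewrite -leqn0 leqNgt -has_count; apply/hasPn => z.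
      rewrite in_cons => /orP [/eqP ->|hz] /=; first by rewrite neq_ltn hx.
      have := allP rx z hz => /= hzx; rewrite neq_ltn; apply/orP; left.
      exact: leq_ltn_trans hzx hx.
    by [].
  rewrite /= hx /=; apply/allP => z hz; have := allP rx z hz => /= hzx.
  exact: leq_ltn_trans hzx hx.
have xeq : x = L by apply/eqP; rewrite eqn_leq xL hx.
have [t [Et At]] := IH (fun z hz => Hle z ((mem_behead (s:=x::r) hz))) sr.
exists t; split => //=; rewrite xeq eqxx /= {1}Et; by [].
Qed.

Lemma decomp alpha : sorted geq alpha ->
  exists t, alpha = nseq (mult_largest alpha) (largest alpha) ++ t /\
            all (fun z => z < largest alpha) t.
Proof. move=> sa; apply: decomp_gen => // z; exact: Lmax. Qed.

Lemma strict_nth mu : sorted geq mu -> uniq mu ->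
  forall j, j.+1 < size mu -> nth 0 mu j.+1 < nth 0 mu j.
Proof.
move=> smu umu j hj; rewrite ltn_neqAle sorted_nth_geq // andbT.
rewrite nth_uniq //; try lia; exact: ltnW.
Qed.

Definition gtr : rel nat := fun a b => b < a.

Lemma gtr_trans : transitive gtr.
Proof. move=> y x z /= H1 H2; exact: ltn_trans H2 H1. Qed.

Lemma Ktail x s mu : sorted geq mu -> uniq mu -> size (x :: s) = size mu ->
  cond (x :: s) mu -> forall z, z \in s -> z < x /\ z <= nth 0 s 0.
Proof.
move=> smu umu sz c.
have st : sorted gtr (x :: s).
  apply/(sortedP 0) => i hi; rewrite /gtr.
  have hi' : i.+1 < size mu by rewrite -sz.
  have := strict_nth smu umu hi'.
  have := c i (ltnW hi'); lia.
have := order_path_min gtr_trans st => /allP Hx z hz; split; first exact: Hx.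
move: st => /path_sorted; case: (s) hz => [|w s'] //; rewrite in_cons => /orP [/eqP ->//|hz] st.
have := allP (order_path_min gtr_trans st) z hz; rewrite /gtr /=; exact: ltnW.
Qed.

Lemma largest_head y r : sorted geq (y :: r) -> largest (y :: r) = y.
Proof.
move=> s; have rx : all (geq y) r := order_path_min geq_transitive s.
rewrite /= ; apply/maxn_idPl.
elim: r rx {s} => //= w r IH /andP [h1 h2]; rewrite geq_max h1; exact: IH.
Qed.

Lemma nth_le_largest s alpha j : subseq s alpha -> nth 0 s j <= largest alpha.
Proof.
move=> sub; case: (ltnP j (size s)) => hj; last by rewrite nth_default.
apply: Lmax; exact: (mem_subseq sub (mem_nth 0 hj)).
Qed.

Lemma sorted_nseq_cat n x t : sorted geq t -> all (fun z => z <= x) t ->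
  sorted geq (nseq n x ++ t).
Proof.
move=> st At; elim: n => [|n IH] //=.
rewrite (path_sortedE geq_transitive) IH andbT all_cat all_nseq /= leqnn orbT /=.
exact: At.
Qed.

Lemma add_ones_take c alpha : c <= size alpha ->
  add_ones c alpha = map succn (take c alpha) ++ drop c alpha.
Proof.
move=> hc; rewrite /add_ones (maxn_idPr hc).
apply: (@eq_from_nth _ 0).
  by rewrite size_mkseq size_cat size_map size_takel // size_drop subnKC.
move=> j; rewrite size_mkseq => hj; rewrite nth_mkseq // nth_cat size_map size_takel //.
case: (ltnP j c) => hjc.
  by rewrite (nth_map 0) ?size_takel // nth_take // addn1.
by rewrite nth_drop subnKC // addn0.
Qed.

Lemma part1 alpha mu k : is_partition alpha -> is_strict mu -> k < mult_largest alpha ->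
     (contains alpha mu <-> contains (drop k alpha) mu).
Proof.
move=> /andP[sa pa] /andP[/andP[smu pmu] umu] hk.
have sd : sorted geq (drop k alpha) :=
  subseq_sorted geq_transitive (drop_subseq _ _) sa.
rewrite (char_iff sa smu pmu) (char_iff sd smu pmu).
have [t [Ea At]] := decomp sa.
set L := largest alpha in Ea At; set m := mult_largest alpha in Ea At hk.
split; last first.
  by case=> s [sub [sz c]]; exists s; split => //; exact: subseq_trans sub (drop_subseq _ _).
case=> s [sub [sz c]]; exists s; split => //.
rewrite Ea drop_cat size_nseq hk drop_nseq.
case: s sub sz c => [|x s'] sub sz c; first exact: sub0seq.
have xL : x <= L := Lmax (mem_subseq sub (mem_head _ _)).
have Kt := Ktail smu umu sz c.
have nL : forall z, z \in s' -> z \notin nseq m L.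
  move=> z hz; rewrite mem_nseq negb_and; apply/orP; right.
  have [h1 _] := Kt z hz; rewrite neq_ltn; apply/orP; left; exact: leq_trans h1 xL.
have st : subseq s' t.
  apply: (subseq_cat_drop (u:=nseq m L)) nL.
  by rewrite -Ea; exact: subseq_trans (subseq_cons _ _) sub.
have -> : m - k = (m - k).-1.+1 by lia.
rewrite /=; case: eqP => [_|ne].
  exact: subseq_trans st (suffix_subseq _ _).
apply: subseq_trans (suffix_subseq _ _).
apply: (subseq_cat_drop (u:=nseq m L)); first by rewrite -Ea.
move=> z; rewrite in_cons => /orP [/eqP ->|/nL //].
by rewrite mem_nseq negb_and; apply/orP; right; apply/eqP.
Qed.

Lemma part2 alpha mu a m : is_partition alpha -> is_strict mu ->
  largest alpha < a -> 0 < m ->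
  (contains alpha mu <-> contains (prepend_parts a m alpha) (mubar mu)).
Proof.
move=> /andP[sa pa] /andP[/andP[smu pmu] umu] ha hm.
have Lmu : forall z, z \in mu -> z <= largest mu by move=> z; exact: Lmax.
have sp : sorted geq (prepend_parts a m alpha).
  apply: sorted_nseq_cat sa _; apply/allP => z /Lmax hz; exact: ltnW (leq_ltn_trans hz ha).
have smb : sorted geq (mubar mu).
  rewrite /mubar /= (path_sortedE geq_transitive) smu andbT.
  by apply/allP => z /Lmu hz /=; exact: ltnW.
have pmb : all (fun x => 0 < x) (mubar mu) by rewrite /= pmu.
have umb : uniq (mubar mu).
  rewrite /mubar /= umu andbT; apply/negP => /Lmu; by rewrite ltnn.
rewrite (char_iff sa smu pmu) (char_iff sp smb pmb).
have lh : nth 0 mu 0 = largest mu.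
  case: (mu) smu => [|y r] // sr; by rewrite (largest_head sr).
split.
  case=> s [sub [sz c]]; exists (a :: s); split.
    rewrite /prepend_parts -(prednK hm) /= eqxx.
    exact: subseq_trans sub (suffix_subseq _ _).
  split; first by rewrite /= sz.
  move=> [|j] hj /=; last exact: c.
  have := nth_le_largest 0 sub; rewrite -lh; lia.
case=> [[|x s] [sub [sz c]]] //.
exists s; split; last first.
  split; first by case: sz.
  move=> j hj; exact: (c j.+1).
have Kt := Ktail smb umb sz c.
have xa : x <= a.
  have := mem_subseq sub (mem_head _ _); rewrite mem_cat mem_nseq => /orP [/andP [_ /eqP ->] //|/Lmax hx].
  exact: ltnW (leq_ltn_trans hx ha).
apply: (subseq_cat_drop (u:=nseq m a)).
  exact: subseq_trans (subseq_cons _ _) sub.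
move=> z hz; rewrite mem_nseq negb_and; apply/orP; right.
have [h1 _] := Kt z hz; rewrite neq_ltn; apply/orP; left; exact: leq_trans h1 xa.
Qed.

Lemma part3 alpha mu c : is_partition alpha -> is_strict mu ->
  0 < c <= mult_largest alpha ->
  (contains alpha mu <-> contains (add_ones c alpha) (add_ones 1 mu)).
Proof.
move=> /andP[sa pa] /andP[/andP[smu pmu] umu] /andP[c0 cm].
have [t [Ea At]] := decomp sa.
set L := largest alpha in Ea At; set m := mult_largest alpha in Ea At cm.
have Eb : add_ones c alpha = nseq c L.+1 ++ (nseq (m - c) L ++ t).
  rewrite add_ones_take; last by rewrite Ea size_cat size_nseq; lia.
  rewrite Ea -(subnKC cm) nseqD -catA subnKC // take_size_cat ?size_nseq //.
  by rewrite drop_size_cat ?size_nseq // map_nseq.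
have sb : sorted geq (add_ones c alpha).
  rewrite Eb; apply: sorted_nseq_cat.
    apply: sorted_nseq_cat; first by move: sa; rewrite Ea => /(subseq_sorted geq_transitive (suffix_subseq _ _)).
    apply/allP => z hz; exact: ltnW (allP At z hz).
  rewrite all_cat all_nseq leqnSn orbT /=; apply/allP => z hz.
  exact: leqW (ltnW (allP At z hz)).
have bmem : forall z, z \in add_ones c alpha -> z <= L.+1.
  move=> z; rewrite Eb !mem_cat !mem_nseq => /orP [/andP [_ /eqP ->]//|/orP [/andP [_ /eqP ->]//|hz]].
  exact: leqW (ltnW (allP At z hz)).
have mL : forall z, z \in alpha -> z <= L by move=> z; exact: Lmax.
have tsub : forall s, subseq s t -> subseq s alpha.
  move=> s st; rewrite Ea; exact: subseq_trans st (suffix_subseq _ _).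
case: mu smu pmu umu => [|y r] smu pmu umu.
  have -> : add_ones 1 [::] = [:: 1] by [].
  rewrite (char_iff sa smu pmu) (char_iff sb (mu:=[:: 1]) isT isT).
  split=> _.
    exists [:: L.+1]; split; last by split => // [[|j]] //= _; rewrite addn0.
    by rewrite Eb -(prednK c0) /= eqxx sub0seq.
  by exists [::]; split; [exact: sub0seq | split => // j].
have -> : add_ones 1 (y :: r) = y.+1 :: r.
  by rewrite add_ones_take //= take0 drop0.
have smu' : sorted geq (y.+1 :: r).
  move: smu; rewrite /= !(path_sortedE geq_transitive) => /andP [ar ->]; rewrite andbT.
  by apply: sub_all ar => z /= hz; exact: leqW.
have pmu' : all (fun x => 0 < x) (y.+1 :: r) by move: pmu => /= /andP [_ ->].
have umu' : uniq (y.+1 :: r).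
  move: umu smu => /= /andP [_ ->]; rewrite (path_sortedE geq_transitive) andbT => /andP [ar _].
  by apply/negP => /(allP ar) /=; rewrite ltnn.
have yr : forall w r', r = w :: r' -> w < y.
  move=> w r' Er; have := strict_nth smu umu (j:=0); rewrite Er /=; exact.
rewrite (char_iff sa smu pmu) (char_iff sb smu' pmu').
split.
  case=> [[|x s'] [sub [sz cc]]] //.
  have xL : x <= L := mL x (mem_subseq sub (mem_head _ _)).
  have Kt := Ktail smu umu sz cc.
  have st : subseq s' t.
    apply: (subseq_cat_drop (u:=nseq m L)).
      by rewrite -Ea; exact: subseq_trans (subseq_cons _ _) sub.
    move=> z hz; rewrite mem_nseq negb_and; apply/orP; right.
    have [h1 _] := Kt z hz; rewrite neq_ltn; apply/orP; left; exact: leq_trans h1 xL.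
  exists (L.+1 :: s'); split.
    rewrite Eb -(prednK c0) /= eqxx catA; exact: subseq_trans st (suffix_subseq _ _).
  split; first by [].
  move=> [|j] hj /=; last exact: (cc j.+1).
  have := cc 0 erefl; rewrite /=; lia.
case=> [[|x s'] [sub [sz cc]]] //.
have xL : x <= L.+1 := bmem x (mem_subseq sub (mem_head _ _)).
have Kt := Ktail smu' umu' sz cc.
have sL : forall z, z \in s' -> z < L.
  move=> z hz; have [h1 h2] := Kt z hz.
  have [Er|[w [r' Er]]] : r = [::] \/ exists w r', r = w :: r'.
    by case: (r) => [|w r']; [left|right; exists w, r'].
    by move: sz; rewrite Er; case: (s') hz.
  have := yr w r' Er; have := cc 0 erefl; rewrite /= Er /=; lia.
have st : subseq s' t.
  apply: (subseq_cat_drop (u:=nseq c L.+1 ++ nseq (m - c) L)).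
    by rewrite -catA -Eb; exact: subseq_trans (subseq_cons _ _) sub.
  move=> z hz; rewrite mem_cat !mem_nseq negb_or !negb_and; apply/andP; split; apply/orP; right.
    by rewrite neq_ltn (ltn_trans (sL z hz)).
  by rewrite neq_ltn sL.
case: (ltnP x L) => hxL.
  exists (x :: s'); split.
    apply: tsub; apply: (subseq_cat_drop (u:=nseq c L.+1 ++ nseq (m - c) L)).
      by rewrite -catA -Eb.
    move=> z; rewrite in_cons => /orP [/eqP ->|hz].
      rewrite mem_cat !mem_nseq negb_or !negb_and; apply/andP; split; apply/orP; right.
        by rewrite neq_ltn (ltn_trans hxL).
      by rewrite neq_ltn hxL.
    rewrite mem_cat !mem_nseq negb_or !negb_and; apply/andP; split; apply/orP; right.
      by rewrite neq_ltn (ltn_trans (sL z hz)).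
    by rewrite neq_ltn sL.
  split; first by [].
  move=> [|j] hj /=; last exact: (cc j.+1).
  have := cc 0 erefl; rewrite /=; lia.
exists (L :: s'); split.
  rewrite Ea -(prednK (leq_trans c0 cm)) /= eqxx; exact: subseq_trans st (suffix_subseq _ _).
split; first by [].
move=> [|j] hj /=; last exact: (cc j.+1).
have := cc 0 erefl; rewrite /=; lia.
Qed.

Theorem mainTheorem10 (alpha mu : seq nat) :
  is_partition alpha -> is_strict mu ->
  (forall k : nat, k < mult_largest alpha ->
     (contains alpha mu <-> contains (drop k alpha) mu)) /\
  (forall a m : nat, largest alpha < a -> 0 < m ->
     (contains alpha mu <-> contains (prepend_parts a m alpha) (mubar mu))) /\
  (forall c : nat, 0 < c <= mult_largest alpha ->
     (contains alpha mu <-> contains (add_ones c alpha) (add_ones 1 mu))).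
Proof.
move=> pa smu; split; [|split].
- move=> k hk; exact: part1.
- move=> a m ha hm; exact: part2.
- move=> c hc; exact: part3.
Qed.
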